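(* Let $(S,\alpha)$ be a twisted K3 surface, $d=\mathrm{ord}(\alpha)$, $B\in\frac1dH^2(S,\mathbb Z)$ a B-field lift of $\alpha$. Put $\widetilde M=\langle\widetilde{NS}(S,B),(0,0,-\tfrac1d)\rangle$ and $\widetilde T=\langle T(S,B),y\rangle$, where $y\in T(S,B)^\vee$ represents $\lambda([(0,0,-\frac1d)])$. Let $\lambda_0:D_{\widetilde{NS}(S)}\to D_{T(S)}$ be the natural isomorphism and $\bar\lambda:D_{\widetilde M}\to D_{\widetilde T}$ the isomorphism induced by $\lambda$. Then $$\bar\lambda\circ (e^B\circ\kappa)_* = (e^B)_*\circ\lambda_0:\ D_{\widetilde{NS}(S)}\to D_{\widetilde T},$$ where $(e^B\circ\kappa)_*:D_{\widetilde{NS}(S)}\to D_{\widetilde M}$ and $(e^B)_*:D_{T(S)}\to D_{\widetilde T}$ are induced by the isometries $e^B\circ\kappa:\widetilde{NS}(S)\cong\widetilde M$ and $e^B:T(S)\cong\widetilde T$.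
   Context: $S$ is a complex projective K3 surface with $NS(S)$, $T(S)=NS(S)^\perp\subset H^2(S,\mathbb Z)$ and holomorphic 2-form class $\omega_S$. Mukai lattice $\widetilde H(S,\mathbb Z)=H^0\oplus H^2\oplus H^4$, elements $(a,l,b)$, pairing $((a,l,b),(a',l',b'))=(l,l')-ab'-a'b$; $\widetilde{NS}(S)=H^0\oplus NS(S)\oplus H^4$. $e^B(a,l,b)=(a,l+aB,b+(B,l)+\frac a2(B,B))$. A B-field lift of $\alpha\in \mathrm{Br}(S)\cong H^2(S,\mathbb Q)/(NS(S)_{\mathbb Q}+H^2(S,\mathbb Z))$ is a preimage $B$. $\widetilde{NS}(S,B)=e^B(\omega_S)^\perp\cap\widetilde H(S,\mathbb Z)$, $T(S,B)$ its orthogonal complement in $\widetilde H(S,\mathbb Z)$. $\kappa(a,l,b)=(da,l,b/d)$. It is known that $e^B\circ\kappa$ maps $\widetilde{NS}(S)$ isometrically onto $\widetilde M$ and $e^B$ maps $T(S)$ isometrically onto $\widetilde T$. For an even lattice $L$, $D_L=L^\vee/L$. The natural isometry $\lambda:D_{\widetilde{NS}(S,B)}\to D_{T(S,B)}$ sends $[x]$ to $[y']$ where $x+y'\in\widetilde H(S,\mathbb Z)$; likewise $\lambda_0:D_{\widetilde{NS}(S)}\cong D_{NS(S)}\to D_{T(S)}$ sends $[x]$ to $[y']$ with $x+y'\in H^2(S,\mathbb Z)$. Since $\widetilde M/\widetilde{NS}(S,B)$ is generated by the isotropic element $h=[(0,0,-\frac1d)]$, $D_{\widetilde M}=h^\perp/\langle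 h\rangle$ and $D_{\widetilde T}=\lambda(h)^\perp/\langle\lambda(h)\rangle$; $\bar\lambda$ is the isomorphism induced by $\lambda$ on these subquotients. *)

(* Defs.v *)
From HB Require Import structures.
From mathcomp Require Import all_boot all_order all_algebra.
Set Implicit Arguments. Unset Strict Implicit. Unset Printing Implicit Defensive.
Import Order.TTheory GRing.Theory Num.Theory.
Local Open Scope ring_scope.

(** * The K3 lattice  U^3 (+) E8(-1)^2  on Z^22 (a marking of H^2(S,Z)). *)
Definition e8m1 (a b : nat) : int :=
  if a == b then -2
  else if ((a.+1 == b) || (b.+1 == a)) && (a <= 6)%N && (b <= 6)%N then 1
  else if ((a == 2%N) && (b == 7%N)) || ((a == 7%N) && (b == 2%N)) then 1
  else 0.

Definition k3form (i j : nat) : int :=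
  if (i < 6)%N && (j < 6)%N then
    (if (i./2 == j./2) && (i != j) then 1 else 0)
  else if (6 <= i < 14)%N && (6 <= j < 14)%N then e8m1 (i - 6) (j - 6)
  else if (14 <= i < 22)%N && (14 <= j < 22)%N then e8m1 (i - 14) (j - 14)
  else 0.

Definition k3mx (R : pzRingType) : 'M[R]_22 :=
  \matrix_(i < 22, j < 22) (k3form i j)%:~R.

Definition bil (R : pzRingType) (u v : 'rV[R]_22) : R :=
  (u *m k3mx R *m v^T) 0 0.

(** Mukai vectors (a, l, b) in H^0 (+) H^2 (+) H^4 with coefficients in R. *)
Definition mvec (R : Type) := (R * 'rV[R]_22 * R)%type.
Definition mk (R : Type) (a : R) (l : 'rV[R]_22) (b : R) : mvec R := (a, l, b).
Definition m0 (R : Type) (v : mvec R) : R := v.1.1.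
Definition m2 (R : Type) (v : mvec R) : 'rV[R]_22 := v.1.2.
Definition m4 (R : Type) (v : mvec R) : R := v.2.

Definition madd (R : pzRingType) (u v : mvec R) : mvec R :=
  mk (m0 u + m0 v) (m2 u + m2 v) (m4 u + m4 v).
Definition mopp (R : pzRingType) (u : mvec R) : mvec R :=
  mk (- m0 u) (- m2 u) (- m4 u).
Definition mscale (R : pzRingType) (k : R) (u : mvec R) : mvec R :=
  mk (k * m0 u) (k *: m2 u) (k * m4 u).

Definition mpair (R : pzRingType) (u v : mvec R) : R :=
  bil (m2 u) (m2 v) - m0 u * m4 v - m0 v * m4 u.

Definition eB (R : fieldType) (B : 'rV[R]_22) (u : mvec R) : mvec R :=
  mk (m0 u) (m2 u + m0 u *: B)
     (m4 u + bil B (m2 u) + m0 u / 2%:R * bil B B).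

Definition kappa (R : fieldType) (d : nat) (u : mvec R) : mvec R :=
  mk (d%:R * m0 u) (m2 u) (m4 u / d%:R).

Definition mmap (R S : pzRingType) (f : R -> S) (u : mvec R) : mvec S :=
  mk (f (m0 u)) (map_mx f (m2 u)) (f (m4 u)).

Definition vint (v : 'rV[rat]_22) : Prop := forall i, v 0 i \is a Num.int.
Definition mint (u : mvec rat) : Prop :=
  m0 u \is a Num.int /\ vint (m2 u) /\ m4 u \is a Num.int.

(** Lattices are given as predicates on rational vectors.
    L_Q = rational span of a lattice L;  L^dual = {x in L_Q | (x, L) in Z}. *)
Definition mspanQ (L : mvec rat -> Prop) (x : mvec rat) : Prop :=
  exists n : nat, (0 < n)%N /\ L (mscale n%:R x).
Definition mdual (L : mvec rat -> Prop) (x : mvec rat) : Prop :=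
  mspanQ L x /\ forall v, L v -> mpair x v \is a Num.int.
Definition morth (L : mvec rat -> Prop) (x : mvec rat) : Prop :=
  mint x /\ forall v, L v -> mpair x v = 0.

Definition NS (C : numClosedFieldType) (w : 'rV[C]_22) (l : 'rV[rat]_22) : Prop :=
  vint l /\ bil (map_mx ratr l) w = 0.
Definition NSQ (C : numClosedFieldType) (w : 'rV[C]_22) (l : 'rV[rat]_22) : Prop :=
  exists n : nat, (0 < n)%N /\ NS w (n%:R *: l).
(* T(S) = NS(S)^perp in H^2(S,Z), viewed inside the Mukai lattice *)
Definition TS (C : numClosedFieldType) (w : 'rV[C]_22) (u : mvec rat) : Prop :=
  m0 u = 0 /\ m4 u = 0 /\ vint (m2 u) /\
  forall l, NS w l -> bil (m2 u) l = 0.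
Definition NStil (C : numClosedFieldType) (w : 'rV[C]_22) (u : mvec rat) : Prop :=
  mint u /\ NS w (m2 u).
(* NS~(S,B) = e^B(omega)^perp cap H~(S,Z) *)
Definition NSB (C : numClosedFieldType) (w : 'rV[C]_22) (B : 'rV[rat]_22)
  (u : mvec rat) : Prop :=
  mint u /\ mpair (mmap ratr u) (eB (map_mx ratr B) (mk 0 w 0)) = 0.
Definition TSB (C : numClosedFieldType) (w : 'rV[C]_22) (B : 'rV[rat]_22) :=
  morth (NSB w B).

(** Brauer class alpha = [B] in H^2(S,Q)/(NS(S)_Q + H^2(S,Z)); ord(alpha) = d. *)
Definition br_trivial (C : numClosedFieldType) (w : 'rV[C]_22) (v : 'rV[rat]_22) : Prop :=
  exists n, NSQ w n /\ vint (v - n).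
Definition br_order (C : numClosedFieldType) (w : 'rV[C]_22) (B : 'rV[rat]_22)
  (d : nat) : Prop :=
  (0 < d)%N /\ br_trivial w (d%:R *: B) /\
  forall k : nat, (0 < k < d)%N -> ~ br_trivial w (k%:R *: B).

Definition K3_period (C : numClosedFieldType) (w : 'rV[C]_22) : Prop :=
  bil w w = 0 /\ 0 < bil w (map_mx Num.conj w) /\
  exists l, NS w l /\ 0 < bil l l.

(* Main.v *)
Require Import Defs.
From HB Require Import structures.
From mathcomp Require Import all_boot all_order all_algebra.
Import Order.TTheory GRing.Theory Num.Theory.
Local Open Scope ring_scope.

Definition mf (i j : nat) : int :=
  if (i < j)%N then k3form i j
  else if i == j then (if k3form i i == -2 then -1 else 0) else 0.

Lemma mf_check : all (fun i => all (fun j => k3form i j == mf i j + mf j i) (iota 0 22)) (iota 0 22).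
Proof. by vm_compute. Qed.

Lemma k3form_split (i j : 'I_22) : k3form i j = mf i j + mf j i.
Proof.
apply/eqP; move/allP: mf_check => H.
have Hi : (val i \in iota 0 22) by rewrite mem_iota add0n ltn_ord.
move/allP: (H _ Hi) => H2.
by apply: H2; rewrite mem_iota add0n ltn_ord.
Qed.

Definition Mmx (R : pzRingType) : 'M[R]_22 := \matrix_(i < 22, j < 22) (mf i j)%:~R.

Lemma k3mx_split (R : pzRingType) : k3mx R = Mmx R + (Mmx R)^T.
Proof. by apply/matrixP => i j; rewrite !mxE k3form_split rmorphD. Qed.

Lemma bilE (R : comPzRingType) (u v : 'rV[R]_22) :
  bil u v = (u *m Mmx R *m v^T) 0 0 + (v *m Mmx R *m u^T) 0 0.
Proof.
rewrite /bil k3mx_split mulmxDr mulmxDl mxE; congr (_ + _).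
rewrite -[in LHS](trmxK (_ *m _^T)) mxE !trmx_mul trmxK mulmxA trmxK.
by [].
Qed.

Lemma bilC (R : comPzRingType) (u v : 'rV[R]_22) : bil u v = bil v u.
Proof. by rewrite !bilE addrC. Qed.

Lemma bilDl (R : comPzRingType) (a b c : 'rV[R]_22) : bil (a + b) c = bil a c + bil b c.
Proof. by rewrite /bil !mulmxDl mxE. Qed.

Lemma bilNl (R : comPzRingType) (a c : 'rV[R]_22) : bil (- a) c = - bil a c.
Proof. by rewrite /bil !mulNmx mxE. Qed.

Lemma bilZl (R : comPzRingType) k (a c : 'rV[R]_22) : bil (k *: a) c = k * bil a c.
Proof. by rewrite /bil -!scalemxAl mxE. Qed.

Lemma bilBl (R : comPzRingType) (a b c : 'rV[R]_22) : bil (a - b) c = bil a c - bil b c.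
Proof. by rewrite bilDl bilNl. Qed.

Lemma bil0l (R : comPzRingType) (c : 'rV[R]_22) : bil 0 c = 0.
Proof. by rewrite /bil !mul0mx mxE. Qed.

Lemma vintD u v : vint u -> vint v -> vint (u + v).
Proof. by move=> hu hv i; rewrite mxE rpredD. Qed.
Lemma vintN u : vint u -> vint (- u).
Proof. by move=> hu i; rewrite mxE rpredN. Qed.
Lemma vintB u v : vint u -> vint v -> vint (u - v).
Proof. by move=> hu hv; apply: vintD => //; apply: vintN. Qed.
Lemma vintZ k u : k \is a Num.int -> vint u -> vint (k *: u).
Proof. by move=> hk hu i; rewrite mxE rpredM. Qed.
Lemma vint0 : vint 0.
Proof. by move=> i; rewrite mxE. Qed.

Lemma Mmx_int (u v : 'rV[rat]_22) : vint u -> vint v ->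
  (u *m Mmx rat *m v^T) 0 0 \is a Num.int.
Proof.
move=> hu hv; rewrite !mxE; apply: rpred_sum => j _; rewrite !mxE.
apply: rpredM => //; apply: rpred_sum => i _; rewrite !mxE.
by apply: rpredM => //; apply: intr_int.
Qed.

Lemma bil_int (u v : 'rV[rat]_22) : vint u -> vint v -> bil u v \is a Num.int.
Proof. by move=> hu hv; rewrite bilE rpredD // Mmx_int. Qed.

Lemma bil_even (u : 'rV[rat]_22) : vint u -> bil u u / 2%:R \is a Num.int.
Proof.
move=> hu; rewrite bilE -mulr2n -[_ *+ 2]mulr_natr mulfK ?pnatr_eq0 //.
exact: Mmx_int.
Qed.

Lemma bil0r (R : comPzRingType) (c : 'rV[R]_22) : bil c 0 = 0.
Proof. by rewrite bilC bil0l. Qed.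
Lemma bilDr (R : comPzRingType) (a b c : 'rV[R]_22) : bil c (a + b) = bil c a + bil c b.
Proof. by rewrite bilC bilDl !(@bilC _ c). Qed.
Lemma bilZr (R : comPzRingType) k (a c : 'rV[R]_22) : bil c (k *: a) = k * bil c a.
Proof. by rewrite bilC bilZl !(@bilC _ c). Qed.
Lemma bilBr (R : comPzRingType) (a b c : 'rV[R]_22) : bil c (a - b) = bil c a - bil c b.
Proof. by rewrite bilC bilBl !(@bilC _ c). Qed.

Lemma mpairDl (R : comPzRingType) (a b c : mvec R) :
  mpair (madd a b) c = mpair a c + mpair b c.
Proof.
rewrite /mpair /madd /= bilDl mulrDl mulrDr !opprD.
rewrite [X in X + _ = _]addrACA. set p := bil _ _ - _; set q := bil _ _ - _. by rewrite (addrACA p q).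
Qed.

Lemma mpairNl (R : comPzRingType) (a c : mvec R) :
  mpair (mopp a) c = - mpair a c.
Proof. by rewrite /mpair /mopp /= bilNl mulNr mulrN !opprD. Qed.

Lemma mpairZl (R : comPzRingType) k (a c : mvec R) :
  mpair (mscale k a) c = k * mpair a c.
Proof. by rewrite /mpair /mscale /mk /m0 /m2 /m4 /= bilZl !mulrBr !mulrA [_.1.1 * k]mulrC. Qed.

Lemma mpair_pos0 (a c : mvec rat) (n : nat) : (0 < n)%N ->
  mpair (mscale n%:R a) c = 0 -> mpair a c = 0.
Proof.
move=> n0; rewrite mpairZl => /eqP; rewrite mulf_eq0 pnatr_eq0.
by case/orP => [/eqP n00|/eqP //]; rewrite n00 in n0.
Qed.


Lemma addKA' (V : zmodType) (x y z : V) : (x + y) - (x + z) = y - z.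
Proof. by rewrite (addrC x) addrKA. Qed.

Lemma zmod_re (V : zmodType) (p q r s t : V) :
  (p + q + r + s) - (p + r + (q + t)) = s - t.
Proof.
rewrite -(addrA (p + q) r s) -(addrA p q) -(addrA p r) addKA'.
by rewrite (addrCA q r) addKA' addKA'.
Qed.

Lemma mono (F : comPzRingType) (d xa c i : F) :
  d * (d * xa * i * c) = xa * (d * (d * c)) * i.
Proof. by rewrite !mulrA [RHS]mulrAC; congr (_ * _ * _); rewrite mulrC mulrA. Qed.

Lemma key (F : fieldType) (d xb a b c xa zb : F) : d != 0 ->
  d * (zb - b) = d * (xb / d + a + d * xa / 2%:R * c + zb)
                 - (xb + xa * (d * (d * c)) / 2%:R + (d * a + d * b)).
Proof. by move=> dn0; rewrite mulrBr !mulrDr (mulrC d (xb / d)) divfK // mono zmod_re. Qed.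

Theorem proposition2p5 (C : numClosedFieldType) (w : 'rV[C]_22)
  (B : 'rV[rat]_22) (d : nat) (y : mvec rat) :
  K3_period w ->
  br_order w B d ->
  vint (d%:R *: B) ->
  mdual (TSB w B) y ->
  mint (madd (mk 0 0 (- (d%:R)^-1)) y) ->
  forall x y' z : mvec rat,
    mdual (NStil w) x ->
    mdual (TS w) y' ->
    mint (madd x y') ->
    mdual (TSB w B) z ->
    mint (madd (eB B (kappa d x)) z) ->
    exists (t : mvec rat) (k : int),
      TSB w B t /\
      madd z (mopp (eB B y')) = madd t (mscale k%:~R y).
Proof.
move=> _ [d0 _] HdB [[ny [ny0 TSBy]] _] Hyint.
move=> [[xa xl] xb] [[ya yl] yb] [[za zl] zb].
move=> [_ Hxd] [[n' [n'0 TSy']] _] Hxy' [[nz [nz0 TSBz]] _] HI.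
case: y TSBy Hyint => [[y0 y2] y4] TSBy Hyint.
have dn0 : (d%:R : rat) != 0 by rewrite pnatr_eq0 -lt0n.
have NS0 : NS w 0 by split; [exact: vint0 | rewrite map_mx0 bil0l].
have xbZ : xb \is a Num.int.
  have := Hxd (mk 1 0 0) (conj (conj (rpred1 _) (conj vint0 (rpred0 _))) NS0).
  by rewrite /mpair /mk /m0 /m2 /m4 /= bil0r !(mulr0, mul0r, mul1r, mulr1, subr0, sub0r) rpredN.
have xaZ : xa \is a Num.int.
  have := Hxd (mk 0 0 1) (conj (conj (rpred0 _) (conj vint0 (rpred1 _))) NS0).
  by rewrite /mpair /mk /m0 /m2 /m4 /= bil0r !(mulr0, mul0r, mul1r, mulr1, subr0, sub0r) rpredN.
rewrite /TS /mscale /mk /m0 /m2 /m4 /= in TSy'.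
case: TSy' => /eqP hya [/eqP hyb [_ Hyorth]].
have n'n0 : (n'%:R : rat) != 0 by rewrite pnatr_eq0 -lt0n.
move: hya hyb; rewrite !mulf_eq0 (negbTE n'n0) /= => /eqP ya0 /eqP yb0.
subst ya yb.
have Hyo : forall l, NS w l -> bil yl l = 0.
  move=> l /Hyorth /eqP; rewrite bilZl mulf_eq0 (negbTE n'n0) /=.
  by move/eqP.
rewrite /mint /madd /eB /kappa /mk /m0 /m2 /m4 /= in HI Hxy' Hyint.
case: HI => I0 [I2 I4]. case: Hxy' => _ [L2 _]. case: Hyint => Y0 [Y2 Y4].
have dZ : (d%:R : rat) \is a Num.int by apply: natr_int.
have dq : d%:R * (zb - bil B yl) \is a Num.int.
  rewrite (@key _ d%:R xb (bil B xl) (bil B yl) (bil B B) xa zb dn0); apply: rpredB; first by apply: rpredM.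
  have E : bil (d%:R *: B) (d%:R *: B) = d%:R * (d%:R * bil B B) by rewrite bilZl bilZr.
  apply: rpredD; first apply: rpredD => //.
    by rewrite -E -mulrA; apply: rpredM => //; apply: bil_even.
  by rewrite -!bilZl -bilDr; apply: bil_int.
case/intrP: dq => k Hk.
have qE : zb - bil B yl = k%:~R / d%:R by rewrite -Hk mulrC mulKf.
pose v := madd (za, zl, zb) (mopp (eB B (0, yl, 0))).
exists (madd v (mopp (mscale k%:~R (y0, y2, y4)))), k; split; last first.
  by rewrite /v /madd /mopp /mscale /mk /m0 /m2 /m4 /= !subrK.
split.
  rewrite /v /mint /madd /mopp /mscale /eB /mk /m0 /m2 /m4 /=.
  rewrite !(scale0r, mul0r, add0r, addr0, oppr0).
  split; last split.
  - have zaZ : za \is a Num.int.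
      by have := rpredB I0 (rpredM dZ xaZ); rewrite (addrC (_ * xa)) addrK.
    by apply: rpredB => //; apply: rpredM; [apply/intrP; exists k | rewrite add0r in Y0].
  - have -> : zl - yl = (xl + (d%:R * xa) *: B + zl) - (xl + yl) - xa *: (d%:R *: B).
      rewrite scalerA (mulrC xa) -(addrA xl) addKA' addrAC.
      by rewrite (addrC (_ *: B)) addrK.
    apply: vintB; last first.
      by apply: vintZ; [apply: intr_int | rewrite add0r in Y2].
    by apply: vintB; [apply: vintB | apply: vintZ].
  - rewrite qE.
    have -> : k%:~R / d%:R - k%:~R * y4 = - (k%:~R * (- d%:R^-1 + y4)).
      by rewrite mulrDr mulrN opprD opprK.
    by rewrite rpredN; apply: rpredM => //; apply: intr_int.
move=> [[u0 u2] u4] Hu.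
have Hz : mpair (za, zl, zb) (u0, u2, u4) = 0 by exact: (@mpair_pos0 _ _ _ nz0 (TSBz.2 _ Hu)).
have Hy : mpair (y0, y2, y4) (u0, u2, u4) = 0 by exact: (@mpair_pos0 _ _ _ ny0 (TSBy.2 _ Hu)).
rewrite /v !(mpairDl, mpairNl, mpairZl) Hz Hy mulr0 oppr0 !addr0 add0r.
case: Hu => [[u0Z [u2Z _]]].
rewrite /mpair /mmap /eB /mk /m0 /m2 /m4 /= => Hu.
rewrite !(scale0r, addr0, mul0r, add0r, subr0) in Hu *.
apply/eqP; rewrite oppr_eq0; apply/eqP.
have -> : bil yl u2 - u0 * bil B yl = bil yl (u2 - u0 *: B) by rewrite bilBr bilZr (@bilC _ B).
have H0 : bil yl (d%:R *: (u2 - u0 *: B)) = 0.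
  apply: Hyo; split.
    rewrite scalerBr scalerA mulrC -scalerA.
    by apply: vintB; apply: vintZ.
  by rewrite map_mxZ map_mxB map_mxZ bilZl bilBl bilZl Hu mulr0.
move/eqP: H0; rewrite bilZr mulf_eq0 (negbTE dn0) /=.
by move/eqP.
Qed.
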